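(* Let $\tau$ be a good tree-like abstract path of weight $2$. Then $\tau$ has at most one good break. Furthermore: (i) if $\tau$ has exactly one good break, then there is exactly one marker of $\tau$ at which a gluing move applies; (ii) if $\tau$ has no good break, then there are exactly two markers of $\tau$ at which a gluing move applies.
   Context: $\mathbb F=\{0,1\}$, $\mathbb N=\{0,1,2,\dots\}$. Abstract vertex types: $o$ (interior), $u$ (unstable), $s$ (stable); $u,s$ are boundary. An abstract edge is $\varepsilon=(\mu,(o_1,u_1,s_1),(o_2,u_2,s_2))\in\mathbb F\times\mathbb N^3\times\mathbb N^3$ with: if $\mu=0$ then $s_1=u_2=0$; if $\mu=1$ then $o_1=o_2=0$ (interior if $\mu=0$, boundary if $\mu=1$). Weight: $w(\varepsilon)=1$ if $\mu=0$, $2-s_1-u_2$ if $\mu=1$. An abstract path $\tau=(T,\tau,\sigma)$: a non-empty finite directed tree $T=(V,E)$ (nodes; arrows, or breaks), $\tau:V\to$ abstract edges, $\sigma:E\to\{o,u,s\}$, such that for each node $v$ and type $X$, $X_1(v)\ge|\{e:t(e)=v,\sigma(e)=X\}|$, $X_2(v)\ge|\{e:s(e)=v,\sigma(e)=X\}|$, with $X_i(v)$ the entries of $\tau(v)$. Ends: $X_1(\tau)=\sum_vX_1(v)-|\sigma^{-1}(X)|$, $X_2(\tau)=\sum_vX_2(v)-|\sigma^{-1}(X)|$. Nodes are interior/boundary by $\mu(v)$. Weight $w(\tau)=\sum_vw(\tau(v))$. $\tau$ is legal if $s_1(\tau)=u_2(\tau)=0$; tree-like if $o_2(v)+u_2(v)+s_2(v)=1$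 for all $v$; good if $s_1(\tau)=s_2(\tau)=0$. A break $e$ is good if $\sigma(e)\in\{o,u\}$. Subpath = restriction to a non-empty subtree. $\mathrm{Star}^o(v)$ is the subtree induced by $v$ and its adjacent interior nodes. A marker is a node or arrow. Gluing moves (contract a subtree $T'$ to one node $v^*$, reattaching arrows to $v^*$, with $\tau(v^* )=(\mu^*,(o_1(\tau'),u_1(\tau'),s_1(\tau')),(o_2(\tau'),u_2(\tau'),s_2(\tau')))$, $\tau'$ the subpath on $T'$): (Ia) at an arrow both of whose endpoints are interior nodes, contract it, $\mu^*=0$; (Ib) at a boundary node $v$ whose subpath on $\mathrm{Star}^o(v)$ is legal, contract $\mathrm{Star}^o(v)$, $\mu^*=0$; (II) at an arrow both of whose endpoints are boundary nodes, contract it, $\mu^*=1$. *)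

(* Defs.v *)
From HB Require Import structures.
From mathcomp Require Import all_boot all_order all_algebra.
Set Implicit Arguments. Unset Strict Implicit. Unset Printing Implicit Defensive.
Import GRing.Theory Num.Theory.

(* Abstract vertex types: o (interior), u (unstable), s (stable). *)
Inductive vtype := VO | VU | VS.

Definition vtype_eqb (x y : vtype) : bool :=
  match x, y with VO, VO | VU, VU | VS, VS => true | _, _ => false end.

(* Abstract edge (mu, (o1,u1,s1), (o2,u2,s2)); mu = true means boundary. *)
Record aedge := AEdge { mu : bool;
  o1 : nat; u1 : nat; s1 : nat; o2 : nat; u2 : nat; s2 : nat }.

Definition aedge_valid (a : aedge) : Prop :=
  if mu a then o1 a = 0%N /\ o2 a = 0%N else s1 a = 0%N /\ u2 a = 0%N.

Definition X1 (X : vtype) (a : aedge) : nat :=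
  match X with VO => o1 a | VU => u1 a | VS => s1 a end.
Definition X2 (X : vtype) (a : aedge) : nat :=
  match X with VO => o2 a | VU => u2 a | VS => s2 a end.

Definition aweight (a : aedge) : int :=
  if mu a then (Posz 2 - Posz (s1 a) - Posz (u2 a))%R else Posz 1.

(* Labelled directed graph data of an abstract path: nodes, arrows (breaks),
   source s, target t, node labels tau, arrow labels sigma. *)
Record apath := APath {
  node : finType;
  arrow : finType;
  src : arrow -> node;
  tgt : arrow -> node;
  tau : node -> aedge;
  sigma : arrow -> vtype }.

Section Defs.
Variable P : apath.

Definition adj : rel (node P) := fun x y =>
  [exists e : arrow P, ((src e == x) && (tgt e == y)) || ((src e == y) && (tgt e == x))].

Definition is_tree : Prop :=
  [/\ 0 < #|node P|, #|arrow P|.+1 = #|node P| & forall x y, connect adj x y].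

Definition is_apath : Prop :=
  [/\ is_tree,
      (forall v : node P, aedge_valid (tau v)),
      (forall (v : node P) X, #|[set e : arrow P | (tgt e == v) && vtype_eqb (sigma e) X]| <= X1 X (tau v)) &
      (forall (v : node P) X, #|[set e : arrow P | (src e == v) && vtype_eqb (sigma e) X]| <= X2 X (tau v))].

Definition ends1 (S : {set node P}) (X : vtype) : nat :=
  (\sum_(v in S) X1 X (tau v) -
   #|[set e : arrow P | [&& src e \in S, tgt e \in S & vtype_eqb (sigma e) X]]|)%N.
Definition ends2 (S : {set node P}) (X : vtype) : nat :=
  (\sum_(v in S) X2 X (tau v) -
   #|[set e : arrow P | [&& src e \in S, tgt e \in S & vtype_eqb (sigma e) X]]|)%N.

Definition allnodes : {set node P} := [set: node P].

Definition weight : int := (\sum_(v : node P) aweight (tau v))%R.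

Definition legal_set (S : {set node P}) : bool :=
  (ends1 S VS == 0%N) && (ends2 S VU == 0%N).

Definition tree_like : Prop :=
  forall v : node P, (o2 (tau v) + u2 (tau v) + s2 (tau v))%N = 1%N.

Definition good : Prop :=
  ends1 allnodes VS = 0%N /\ ends2 allnodes VS = 0%N.

Definition interior (v : node P) : bool := ~~ mu (tau v).
Definition boundary (v : node P) : bool := mu (tau v).

Definition good_break (e : arrow P) : bool :=
  vtype_eqb (sigma e) VO || vtype_eqb (sigma e) VU.

Definition good_breaks : {set arrow P} := [set e : arrow P | good_break e].

Definition star_o (v : node P) : {set node P} :=
  [set w : node P | (w == v) || (adj v w && interior w)].

Definition move_Ia (e : arrow P) : bool := interior (src e) && interior (tgt e).
Definition move_II (e : arrow P) : bool := boundary (src e) && boundary (tgt e).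
Definition move_Ib (v : node P) : bool := boundary v && legal_set (star_o v).

(* number of markers (nodes or arrows) at which some gluing move applies *)
Definition n_gluing_markers : nat :=
  (#|[set e : arrow P | move_Ia e || move_II e]| +
   #|[set v : node P | move_Ib v]|)%N.
End Defs.

(* Main.v *)
Require Import Defs.
From mathcomp Require Import all_boot all_order all_algebra.
From mathcomp Require Import zify.

Lemma sum_le_eq (I : finType) (f g : I -> nat) :
  (forall i, f i <= g i) -> \sum_i g i <= \sum_i f i -> forall i, f i = g i.
Proof.
move=> fg le i.
have : \sum_i (g i - f i) = 0.
  rewrite sumnB //; apply/eqP; rewrite subn_eq0 //.
move/eqP; rewrite sum_nat_eq0 => /forallP /(_ i) /implyP /(_ isT).
by rewrite subn_eq0 => h; apply/eqP; rewrite eqn_leq fg h.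
Qed.

Lemma card_part (A B : finType) (f : A -> B) (Q : pred A) (S : {set B}) :
  #|[set e | (f e \in S) && Q e]| = \sum_(v in S) #|[set e | (f e == v) && Q e]|.
Proof.
rewrite -sum1_card (partition_big f (mem S)); last by move=> e; rewrite inE => /andP[].
apply: eq_bigr => v vS; rewrite -sum1_card; apply: eq_bigl => e; rewrite !inE.
have vS' : v \in S := vS.
case: eqP => [->|]. by move: vS'; rewrite andbT; case: (_ \in _). by rewrite !andbF.
Qed.

Lemma vtype_eqbP x y : reflect (x = y) (vtype_eqb x y).
Proof. by case: x; case: y; constructor. Qed.

Lemma sum_bool_card (T : finType) (A : {set T}) (b : pred T) :
  \sum_(i in A) (b i : nat) = #|[set i in A | b i]|.
Proof.
rewrite -sum1_card [RHS]big_mkcond /= big_mkcond /=.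
apply: eq_bigr => i _; rewrite !inE; by case: (i \in A); case: (b i).
Qed.

Lemma tl_le {P : apath} (TL : tree_like P) (v : node P) :
  [/\ o2 (tau v) <= 1, u2 (tau v) <= 1 & s2 (tau v) <= 1].
Proof. have := TL v; split; lia. Qed.

Lemma sig_src {P : apath} (H : is_apath P) (e : arrow P) :
  0 < X2 (sigma e) (tau (src e)).
Proof.
case: H => _ _ _ H; apply: leq_trans (H (src e) (sigma e)).
rewrite card_gt0; apply/set0Pn; exists e; rewrite inE eqxx /=.
by case: (sigma e).
Qed.

Lemma sig_tgt {P : apath} (H : is_apath P) (e : arrow P) :
  0 < X1 (sigma e) (tau (tgt e)).
Proof.
case: H => _ _ H _; apply: leq_trans (H (tgt e) (sigma e)).
rewrite card_gt0; apply/set0Pn; exists e; rewrite inE eqxx /=.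
by case: (sigma e).
Qed.

Lemma src_inj {P : apath} (H : is_apath P) (TL : tree_like P) : injective (@src P).
Proof.
move=> e e' ee; apply/eqP; apply/negPn/negP => ne.
have h1 := sig_src H e; have h2 := sig_src H e'; rewrite -ee in h2.
have tl := TL (src e).
case Hs: (vtype_eqb (sigma e) (sigma e')).
  case: H => _ _ _ H; have := H (src e) (sigma e).
  have : [set e; e'] \subset [set e0 | (src e0 == src e) && vtype_eqb (sigma e0) (sigma e)].
    apply/subsetP => x; rewrite !inE => /orP[]/eqP->; rewrite ?ee eqxx /=.
      by case: (sigma e).
    by move: Hs; case: (sigma e); case: (sigma e').
  move/subset_leq_card; rewrite cards2 ne => le1 le2.
  have := leq_trans le1 le2; case: (sigma e) tl; rewrite /=; lia.
move: Hs h1 h2; case: (sigma e); case: (sigma e') => //= _; lia.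
Qed.

Lemma rootP {P : apath} (H : is_apath P) (TL : tree_like P) :
  exists r : node P, (forall e, src e != r) /\ (forall v, v != r -> exists e, src e = v).
Proof.
have [[n0 nE _] _ _ _] := H.
have c : #|~: (@src P @: [set: arrow P])| = 1.
  by rewrite cardsCs setCK card_imset ?cardsT ?cardsC //; [ rewrite -nE subSnn | exact: src_inj ].
move/eqP: c => /cards1P [r hr]; exists r; split.
  move=> e; apply/eqP => er; have : r \in ~: (@src P @: [set: arrow P]) by rewrite hr set11.
  by rewrite inE -er imset_f ?inE.
move=> v vr; have : v \notin ~: (@src P @: [set: arrow P]) by rewrite hr inE.
by rewrite inE negbK => /imsetP [e _ ->]; exists e.
Qed.

Lemma sumT (T : finType) (F : T -> nat) : \sum_(v in [set: T]) F v = \sum_v F v.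
Proof. by apply: eq_bigl => v; rewrite inE. Qed.

Lemma s_arrows_src {P : apath} :
  \sum_(v : node P) #|[set e : arrow P | (src e == v) && vtype_eqb (sigma e) VS]| =
  #|[set e : arrow P | [&& src e \in allnodes P, tgt e \in allnodes P & vtype_eqb (sigma e) VS]]|.
Proof.
rewrite -sumT -card_part; apply: eq_card => e; by rewrite !inE.
Qed.

Lemma s_arrows_tgt {P : apath} :
  \sum_(v : node P) #|[set e : arrow P | (tgt e == v) && vtype_eqb (sigma e) VS]| =
  #|[set e : arrow P | [&& src e \in allnodes P, tgt e \in allnodes P & vtype_eqb (sigma e) VS]]|.
Proof.
rewrite -sumT -card_part; apply: eq_card => e; by rewrite !inE.
Qed.

Lemma s_out {P : apath} (H : is_apath P) (G : good P) (v : node P) :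
  s2 (tau v) = #|[set e | (src e == v) && vtype_eqb (sigma e) VS]|.
Proof.
symmetry; apply: (@sum_le_eq _ (fun v => #|[set e | (src e == v) && vtype_eqb (sigma e) VS]|)
  (fun v => s2 (tau v))).
  by move=> w; case: H => _ _ _ H; exact: (H w VS).
rewrite s_arrows_src -sumT; case: G => _; rewrite /ends2 /= => /eqP; rewrite subn_eq0.
by [].
Qed.

Lemma s_in {P : apath} (H : is_apath P) (G : good P) (v : node P) :
  s1 (tau v) = #|[set e | (tgt e == v) && vtype_eqb (sigma e) VS]|.
Proof.
symmetry; apply: (@sum_le_eq _ (fun v => #|[set e | (tgt e == v) && vtype_eqb (sigma e) VS]|)
  (fun v => s1 (tau v))).
  by move=> w; case: H => _ _ H _; exact: (H w VS).
rewrite s_arrows_tgt -sumT; case: G; rewrite /ends1 /= => /eqP; rewrite subn_eq0.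
by [].
Qed.

Lemma s_sums {P : apath} (H : is_apath P) (G : good P) :
  \sum_(v : node P) s1 (tau v) = \sum_(v : node P) s2 (tau v).
Proof.
rewrite (eq_bigr _ (fun v _ => s_in H G v)) (eq_bigr _ (fun v _ => s_out H G v)).
by rewrite s_arrows_src s_arrows_tgt.
Qed.

Lemma sumPosz (T : finType) (F : T -> nat) : (\sum_v Posz (F v))%R = Posz (\sum_v F v).
Proof. by rewrite (big_morph Posz PoszD (erefl _)). Qed.

Lemma weight_sum {P : apath} (H : is_apath P) (TL : tree_like P) (G : good P) :
  weight P = Posz 2 -> \sum_(v : node P) (o2 (tau v) + mu (tau v)) = 2.
Proof.
move=> W.
have pn (v : node P) : (aweight (tau v) + Posz (s1 (tau v)) = Posz (o2 (tau v) + mu (tau v)) + Posz (s2 (tau v)))%R.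
  have tl := TL v; case: H => _ /(_ v) + _ _; rewrite /aweight /aedge_valid.
  case: (mu (tau v)) => [[h1 h2]|[h1 h2]] /=; lia.
have := (eq_bigr _ (fun v _ => pn v) : (\sum_(v : node P) (aweight (tau v) + Posz (s1 (tau v))) = \sum_(v : node P) (Posz (o2 (tau v) + mu (tau v)) + Posz (s2 (tau v))))%R).
rewrite !big_split /= -/(weight P) W !sumPosz s_sums // => /eqP.
rewrite -PoszD -PoszD eqz_nat => /eqP; move=> h; rewrite -big_split /=; lia.
Qed.

Lemma no_loop {P : apath} (H : is_apath P) (TL : tree_like P) (e : arrow P) :
  src e != tgt e.
Proof.
have [r [r1 r2]] := rootP H TL.
pose f (v : node P) := if [pick e | src e == v] is Some e then tgt e else v.
have fsrc (e' : arrow P) : f (src e') = tgt e'.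
  rewrite /f; case: pickP => [e'' /eqP /(src_inj H TL) -> // | /(_ e')].
  by rewrite eqxx.
have A v : exists k, iter k f v = r.
  have gen : forall (p : seq (node P)) (x : node P), path (@adj P) x p -> (exists k, iter k f x = r) ->
      exists k, iter k f (last x p) = r.
    elim=> [|y p IH] x pth Ax //=.
  case/andP: pth => axy pth; apply: IH pth _.
  case/existsP: axy => e' /orP[]/andP[/eqP sx /eqP ty].
    case: Ax => [[|k]] /=.
      by move=> xr; have := r1 e'; rewrite sx xr eqxx.
    by rewrite -iterS iterSr -sx fsrc ty => hk; exists k.
  by case: Ax => k hk; exists k.+1; rewrite iterSr -sx fsrc ty.
  have [[_ _ conn] _ _ _] := H; have := conn r v; case/connectP => p pth ->.
  by apply: gen pth _; exists 0.
apply/eqP => l; have fv : f (src e) = src e by rewrite fsrc -l.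
have [k hk] := A (src e); rewrite iter_fix // in hk.
by have := r1 e; rewrite hk eqxx.
Qed.

Lemma ends1_zero {P : apath} (H : is_apath P) (G : good P) (S : {set node P}) :
  (forall e, sigma e = VS -> tgt e \in S -> src e \in S) -> ends1 S VS = 0.
Proof.
move=> hS; apply/eqP; rewrite /ends1 /= subn_eq0.
rewrite (eq_bigr _ (fun v _ => s_in H G v)) -card_part.
apply: subset_leq_card; apply/subsetP => e; rewrite !inE => /andP[tS se].
by rewrite hS ?tS ?se //; apply/vtype_eqbP.
Qed.

Lemma sum_u2 {P : apath} (TL : tree_like P) (S : {set node P}) :
  \sum_(v in S) u2 (tau v) = #|[set v in S | u2 (tau v) == 1]|.
Proof.
rewrite -sum_bool_card; apply: eq_bigr => v _.
by have [_ + _] := tl_le TL v; case: (u2 (tau v)) => [|[|]].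
Qed.

Lemma sig_u {P : apath} (H : is_apath P) (TL : tree_like P) (e : arrow P) :
  u2 (tau (src e)) = 1 -> sigma e = VU.
Proof.
move=> u; have := sig_src H e; have := TL (src e); case: (sigma e) => //=; lia.
Qed.

Lemma ends2_zero {P : apath} (H : is_apath P) (TL : tree_like P) (S : {set node P}) :
  (forall v, v \in S -> u2 (tau v) = 1 -> exists e, src e = v /\ tgt e \in S) ->
  ends2 S VU = 0.
Proof.
move=> hS; apply/eqP; rewrite /ends2 /= subn_eq0 sum_u2 //.
apply: leq_trans (leq_imset_card (@src P) _).
apply: subset_leq_card; apply/subsetP => v; rewrite inE => /andP[vS /eqP u].
have [e [se tS]] := hS v vS u; apply/imsetP; exists e => //.
by rewrite inE se vS tS /= sig_u // se.
Qed.

Lemma ends2_pos {P : apath} (H : is_apath P) (TL : tree_like P) (S : {set node P}) v :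
  v \in S -> u2 (tau v) = 1 -> (forall e, src e = v -> tgt e \notin S) ->
  ends2 S VU != 0.
Proof.
move=> vS u hS; rewrite /ends2 /= subn_eq0 -ltnNge sum_u2 //.
rewrite -(card_imset _ (src_inj H TL)) (cardsD1 v [set v0 in S | _]). rewrite !inE vS u eqxx /= add1n ltnS.
apply: subset_leq_card; apply/subsetP => w /imsetP [e]; rewrite !inE => /and3P [sS tS se] ->.
rewrite sS /=; apply/andP; split.
  by apply/eqP => sv; have := hS e sv; rewrite tS.
by have := sig_src H e; have := TL (src e); move/vtype_eqbP: se => -> /=; move=> *; apply/eqP; lia.
Qed.

Lemma card_cond (T : finType) (x : T) (b : bool) : #|[set e | (e == x) && b]| = b.
Proof.
case: b.
  by rewrite (_ : [set e | (e == x) && true] = [set x]) ?cards1 //; apply/setP => e; rewrite !inE andbT.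
by rewrite (_ : [set e | (e == x) && false] = set0) ?cards0 //; apply/setP => e; rewrite !inE andbF.
Qed.

Theorem corollary3p17 (P : apath) :
  is_apath P -> tree_like P -> good P -> weight P = Posz 2 ->
  [/\ #|good_breaks P| <= 1,
      #|good_breaks P| = 1 -> n_gluing_markers P = 1
    & #|good_breaks P| = 0 -> n_gluing_markers P = 2].
Proof.
move=> H TL G W.
have [r [r1 r2]] := rootP H TL.
have s2r : s2 (tau r) = 0.
  rewrite (s_out H G r); apply/eqP; rewrite cards_eq0; apply/eqP/setP => e.
  by rewrite !inE (negbTE (r1 e)).
have [_ valid _ _] := H.
pose t (v : node P) := o2 (tau v) + mu (tau v).
have tle v : t v <= 1.
  have := valid v; have := TL v; rewrite /t /aedge_valid; case: (mu (tau v)) => /= h [h1 h2]; lia.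
have tr : t r = 1.
  have := valid r; have := TL r; rewrite /t /aedge_valid; case: (mu (tau r)) => /= h [h1 h2]; lia.
have ts : \sum_v t v = 2 by exact: weight_sum H TL G W.
have [q [qr tq other]] : exists q, [/\ q != r, t q = 1 & forall v, v != r -> v != q -> t v = 0].
  have h1 : \sum_(v | v != r) t v = 1 by move: ts; rewrite (bigD1 r) //= tr; lia.
  have : ~~ [forall (v | v != r), t v == 0] by rewrite -sum_nat_eq0 h1.
  case/forallPn => q /=; rewrite negb_imply => /andP[qr tq].
  have tq1 : t q = 1 by have := tle q; lia.
  exists q; split => // v vr vq.
  move: h1; rewrite (bigD1 q) //= tq1 => h2.
  have : \sum_(v | (v != r) && (v != q)) t v == 0 by apply/eqP; lia.
  by rewrite sum_nat_eq0 => /forallP /(_ v); rewrite vr vq /= => /eqP.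
have [eq eqs] := r2 q qr.
pose z := tgt eq.
have oth v : v != r -> v != q -> mu (tau v) = false /\ s2 (tau v) = 1.
  move=> vr vq; have := other v vr vq; have := valid v; have := TL v.
  rewrite /t /aedge_valid; case: (mu (tau v)) => /= h [h1 h2] h3; split => //; lia.
have out_oth e : e != eq -> [/\ sigma e = VS, mu (tau (src e)) = false & mu (tau (tgt e))].
  move=> ne; have sq : src e != q.
    by apply/eqP => sq; move: ne; rewrite -(src_inj H TL eq e) ?eqxx // eqs sq.
  have [m s] := oth _ (r1 e) sq.
  have sg : sigma e = VS.
    have := sig_src H e; have := TL (src e); have := valid (src e); rewrite /aedge_valid m.
    case: (sigma e) => //= [[_ h]|]; lia.
  split => //; have := sig_tgt H e; rewrite sg /=; have := valid (tgt e); rewrite /aedge_valid.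
  by case: (mu (tau (tgt e))) => // [[-> _]].
have bnd v : mu (tau v) -> v = r \/ v = q.
  case: (v =P r) => [->|/eqP vr]; first by left.
  case: (v =P q) => [->|/eqP vq]; first by right.
  by have [-> _] := oth v vr vq.
have gb : good_breaks P = [set e | (e == eq) && (s2 (tau q) == 0)].
  apply/setP => e; rewrite !inE /good_break; case: (e =P eq) => [->|/eqP ne] /=.
    have := sig_src H eq; rewrite eqs; have := TL q.
    case: (sigma eq) => /=; case: (s2 (tau q)) => [|n] /= h1 h2; try done; exfalso; lia.
  by have [-> _ _] := out_oth e ne.
have ga : [set e | move_Ia e || move_II e] = [set e | (e == eq) && (move_Ia eq || move_II eq)].
  apply/setP => e; rewrite !inE; case: (e =P eq) => [->|/eqP ne] //=.
  rewrite /move_Ia /move_II /interior /boundary; have [_ -> ->] := out_oth e ne; by [].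
have Ibr : move_Ib r = false.
  rewrite /move_Ib /boundary; case mr: (mu (tau r)) => //=.
  have u : u2 (tau r) = 1.
    have := valid r; have := TL r; rewrite /aedge_valid mr s2r => + [_ h]; lia.
  have := ends2_pos H TL (star_o r) r; rewrite inE eqxx => /(_ isT u).
  have nr : forall e, src e = r -> tgt e \notin star_o r by move=> e er; have := r1 e; rewrite er eqxx.
  by move/(_ nr); rewrite /legal_set => /negbTE ->; rewrite andbF.
have gI : [set v | move_Ib v] = [set v | (v == q) && move_Ib q].
  apply/setP => v; rewrite !inE; case: (v =P q) => [->|/eqP ne] //=.
  case m: (move_Ib v) => //; move: (m); rewrite /move_Ib /boundary => /andP[/bnd [vr|vq] _].
    by rewrite vr Ibr in m.
  by rewrite vq eqxx in ne.
have mu_u (v : node P) : u2 (tau v) = 1 -> mu (tau v).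
  move=> uv; have := valid v; rewrite /aedge_valid; case: (mu (tau v)) => // [[_ h]]; lia.
have Ibq : mu (tau q) -> move_Ib q = (u2 (tau q) == 0) || ~~ mu (tau z).
  move=> mq; rewrite /move_Ib /boundary mq /legal_set /=.
  have inS (v : node P) : v \in star_o q -> mu (tau v) -> v = q.
    by rewrite inE /interior => /orP[/eqP //|/andP[_ /negbTE ->]].
  have -> : ends1 (star_o q) VS = 0.
    apply: (ends1_zero H G) => e se tS.
    have mt : mu (tau (tgt e)).
      have := sig_tgt H e; rewrite se /=; have := valid (tgt e); rewrite /aedge_valid.
      by case: (mu (tau (tgt e))) => // [[-> _]].
    have tq' := inS _ tS mt.
    case: (src e =P q) => [->|/eqP sq]; first by rewrite inE eqxx.
    have [m _] := oth _ (r1 e) sq; rewrite inE /interior m andbT; apply/orP; right.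
    by apply/existsP; exists e; rewrite eqxx tq' eqxx orbT.
  rewrite eqxx /=.
  have [_ ul _] := tl_le TL q.
  case hu: (u2 (tau q)) ul => [|[|n]] //= _.
    apply/eqP; apply: (ends2_zero H TL) => v vS uv.
    by have vq := inS v vS (mu_u v uv); rewrite vq hu in uv.
  case mz: (mu (tau z)) => /=.
    apply/negbTE; apply: (ends2_pos H TL (star_o q) q) => //; first by rewrite inE eqxx.
    move=> e se; rewrite -se in eqs; rewrite -(src_inj H TL eq e eqs) -/z inE /interior mz andbF orbF.
    by have := no_loop H TL eq; rewrite eqs se eq_sym.
  apply/eqP; apply: (ends2_zero H TL) => v vS uv.
  rewrite (inS v vS (mu_u v uv)); exists eq; split => //.
  rewrite inE /interior -/z mz andbT; apply/orP; right; apply/existsP; exists eq.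
  by rewrite eqs !eqxx.
rewrite /n_gluing_markers ga gI gb !card_cond.
rewrite /move_Ia /move_II /interior /boundary eqs -/z /=.
have := sig_src H eq; have := sig_tgt H eq; rewrite eqs -/z.
have vq := valid q; have vz := valid z; have tlq := TL q; move: tq; rewrite /t.
move: vq vz Ibq; rewrite /aedge_valid.
case: (sigma eq) => /=.
- case: (mu (tau q)) => [[h1 h2]|[h1 h2]]; case: (mu (tau z)) => [[h3 h4]|[h3 h4]] /=; try (move=> *; exfalso; lia).
  move=> _ tq hz hq; have -> : s2 (tau q) = 0 by lia.
  rewrite /move_Ib /boundary (_ : mu (tau q) = false) //.
  by move: (valid q); rewrite /aedge_valid; case: (mu (tau q)) => // [[_ h]]; lia.
- case: (mu (tau q)) => [[h1 h2]|[h1 h2]]; last by move=> *; exfalso; lia.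
  move=> _ Ib tq hz hq.
  have s0 : s2 (tau q) = 0 by lia.
  have u1 : u2 (tau q) = 1 by lia.
  rewrite Ib // s0 u1 /=; by case: (mu (tau z)).
- case: (mu (tau q)) => [[h1 h2]|[h1 h2]]; last by move=> *; exfalso; lia.
  case: (mu (tau z)) => [[h3 h4]|[h3 h4]] Ib tq hz hq; last by exfalso; lia.
  have s1' : s2 (tau q) = 1 by lia.
  have u0 : u2 (tau q) = 0 by lia.
  by rewrite Ib // s1' u0 /=.
Qed.
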